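(* Let $G$ be a group acting by graph automorphisms on connected graphs $\Gamma_1$ and $\Gamma_2$, each with finitely many orbits of edges. Suppose there is a bijection $\beta: V(\Gamma_1)\to V(\Gamma_2)$ between the vertex sets such that $\beta(gv)=g\beta(v)$ for all $g\in G$ and $v\in V(\Gamma_1)$. Then $\Gamma_1$ and $\Gamma_2$ (with combinatorial metrics) are quasi-isometric.
   Context: Graphs are equipped with the combinatorial metric (each edge has length 1); they need not be locally finite. Metric spaces $M_1,M_2$ are quasi-isometric if there are $\lambda>0$, $c\ge0$, $\varepsilon\ge0$ and a map $\alpha:M_1\to M_2$ with $\frac1\lambda d(x,y)-c\le d(\alpha(x),\alpha(y))\le \lambda d(x,y)+c$ for all $x,y\in M_1$, and every point of $M_2$ within distance $\varepsilon$ of $\alpha(M_1)$. *)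

(* Defs.v *)
From Stdlib Require Import Reals List.
Open Scope R_scope.

Definition is_group (G : Type) (mul : G -> G -> G) (one : G) (inv : G -> G) : Prop :=
  (forall a b c, mul a (mul b c) = mul (mul a b) c) /\
  (forall a, mul one a = a) /\ (forall a, mul a one = a) /\
  (forall a, mul (inv a) a = one) /\ (forall a, mul a (inv a) = one).

Definition is_graph (V : Type) (adj : V -> V -> Prop) : Prop :=
  (forall u v, adj u v -> adj v u) /\ (forall v, ~ adj v v).

Inductive walk {V : Type} (adj : V -> V -> Prop) : nat -> V -> V -> Prop :=
| walk0 : forall x, walk adj 0 x x
| walkS : forall n x y z, adj x y -> walk adj n y z -> walk adj (S n) x z.

Definition connected_graph {V : Type} (adj : V -> V -> Prop) : Prop :=
  forall x y, exists n, walk adj n x y.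

Definition gdist {V : Type} (adj : V -> V -> Prop) (x y : V) (n : nat) : Prop :=
  walk adj n x y /\ (forall m, walk adj m x y -> (n <= m)%nat).

Definition acts_by_automorphisms (G V : Type) (mul : G -> G -> G) (one : G)
  (adj : V -> V -> Prop) (act : G -> V -> V) : Prop :=
  (forall v, act one v = v) /\
  (forall g h v, act (mul g h) v = act g (act h v)) /\
  (forall g u v, adj u v <-> adj (act g u) (act g v)).

Definition finitely_many_edge_orbits (G V : Type) (adj : V -> V -> Prop)
  (act : G -> V -> V) : Prop :=
  exists l : list (V * V),
    forall u v, adj u v -> exists e, In e l /\ exists g,
      (act g (fst e) = u /\ act g (snd e) = v) \/
      (act g (fst e) = v /\ act g (snd e) = u).

Definition graphs_quasi_isometric {V1 V2 : Type}
  (adj1 : V1 -> V1 -> Prop) (adj2 : V2 -> V2 -> Prop) : Prop :=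
  exists (lam c eps : R) (alpha : V1 -> V2),
    lam > 0 /\ c >= 0 /\ eps >= 0 /\
    (forall x y n m, gdist adj1 x y n -> gdist adj2 (alpha x) (alpha y) m ->
       / lam * INR n - c <= INR m /\ INR m <= lam * INR n + c) /\
    (forall z, exists x n, gdist adj2 z (alpha x) n /\ INR n <= eps).

(* Main.v *)
Require Import Defs.
From Stdlib Require Import Reals List Lia Lra.

Lemma walk_app {V} (adj : V -> V -> Prop) n m x y z :
  walk adj n x y -> walk adj m y z -> walk adj (n + m) x z.
Proof.
  induction 1; intros Hw; simpl; auto.
  eapply walkS; eauto.
Qed.

Lemma walk_rev {V} (adj : V -> V -> Prop) n x y :
  (forall u v, adj u v -> adj v u) -> walk adj n x y -> walk adj n y x.
Proof.
  intros Hs; induction 1. constructor.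
  replace (S n) with (n + 1)%nat by lia.
  eapply walk_app; eauto. eapply walkS; [apply Hs; eauto| constructor].
Qed.

Lemma walk_map {V} (adj : V -> V -> Prop) (h : V -> V) n x y :
  (forall u v, adj u v -> adj (h u) (h v)) -> walk adj n x y -> walk adj n (h x) (h y).
Proof.
  intros Hh; induction 1. constructor. eapply walkS; eauto.
Qed.

Lemma walk_lip {V W} (adjV : V -> V -> Prop) (adjW : W -> W -> Prop) (f : V -> W) K :
  (forall u v, adjV u v -> exists k, (k <= K)%nat /\ walk adjW k (f u) (f v)) ->
  forall n x y, walk adjV n x y -> exists k, (k <= K * n)%nat /\ walk adjW k (f x) (f y).
Proof.
  intros HK n x y; induction 1.
  - exists 0%nat; split; [lia | constructor].
  - destruct IHwalk as [k [Hk Hw]]. destruct (HK _ _ H) as [k' [Hk' Hw']].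
    exists (k' + k)%nat; split; [nia|]. eapply walk_app; eauto.
Qed.

Lemma edge_bound (G V W : Type) (adjV : V -> V -> Prop) (adjW : W -> W -> Prop)
  actV actW (f : V -> W) :
  is_graph W adjW -> connected_graph adjW ->
  (forall g u v, adjW u v -> adjW (actW g u) (actW g v)) ->
  finitely_many_edge_orbits G V adjV actV ->
  (forall g v, f (actV g v) = actW g (f v)) ->
  exists K, forall u v, adjV u v -> exists k, (k <= K)%nat /\ walk adjW k (f u) (f v).
Proof.
  intros [Hs _] Hc Ha [l Hl] Hf.
  assert (HL : exists K, forall e, In e l -> exists k, (k <= K)%nat /\
             walk adjW k (f (fst e)) (f (snd e))).
  { clear Hl. induction l as [|e l IH].
    - exists 0%nat; intros e [].
    - destruct IH as [K HK]. destruct (Hc (f (fst e)) (f (snd e))) as [n Hn].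
      exists (K + n)%nat. intros e' [<-|Hi].
      + exists n; split; [lia|auto].
      + destruct (HK e' Hi) as [k [? ?]]; exists k; split; [lia|auto]. }
  destruct HL as [K HK]. exists K. intros u v Huv.
  destruct (Hl u v Huv) as [e [Hi [g Hg]]]. destruct (HK e Hi) as [k [Hk Hw]].
  exists k; split; auto.
  apply (walk_map adjW (actW g)) in Hw; [|auto].
  rewrite <- !Hf in Hw.
  destruct Hg as [[H1 H2]|[H1 H2]]; rewrite H1, H2 in Hw; auto.
  apply walk_rev; auto.
Qed.

Theorem lemma3p1 (G : Type) (mul : G -> G -> G) (one : G) (inv : G -> G)
  (V1 V2 : Type) (adj1 : V1 -> V1 -> Prop) (adj2 : V2 -> V2 -> Prop)
  (act1 : G -> V1 -> V1) (act2 : G -> V2 -> V2) (beta : V1 -> V2) :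
  is_group G mul one inv ->
  is_graph V1 adj1 -> is_graph V2 adj2 ->
  connected_graph adj1 -> connected_graph adj2 ->
  acts_by_automorphisms G V1 mul one adj1 act1 ->
  acts_by_automorphisms G V2 mul one adj2 act2 ->
  finitely_many_edge_orbits G V1 adj1 act1 ->
  finitely_many_edge_orbits G V2 adj2 act2 ->
  (exists beta_inv : V2 -> V1,
     (forall v, beta_inv (beta v) = v) /\ (forall w, beta (beta_inv w) = w)) ->
  (forall g v, beta (act1 g v) = act2 g (beta v)) ->
  graphs_quasi_isometric adj1 adj2.
Proof.
  intros _ Hg1 Hg2 Hc1 Hc2 [_ [_ Ha1]] [_ [_ Ha2]] Ho1 Ho2 [bi [Hbi1 Hbi2]] Heq.
  assert (Heq' : forall g w, bi (act2 g w) = act1 g (bi w)).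
  { intros g w. rewrite <- (Hbi2 w) at 1. rewrite <- Heq. apply Hbi1. }
  destruct (edge_bound G V1 V2 adj1 adj2 act1 act2 beta Hg2 Hc2
     (fun g u v H => proj1 (Ha2 g u v) H) Ho1 Heq) as [K1 HK1].
  destruct (edge_bound G V2 V1 adj2 adj1 act2 act1 bi Hg1 Hc1
     (fun g u v H => proj1 (Ha1 g u v) H) Ho2 Heq') as [K2 HK2].
  assert (Hpos : 0 < INR (K1 + K2 + 1)) by (apply lt_0_INR; lia).
  exists (INR (K1 + K2 + 1)), 0, 0, beta.
  split; [lra|]. split; [lra|]. split; [lra|]. split.
  - intros x y n m [Hn Hnmin] [Hm Hmmin].
    destruct (walk_lip _ _ _ _ HK1 _ _ _ Hn) as [k [Hk Hw]].
    specialize (Hmmin _ Hw).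
    destruct (walk_lip _ _ _ _ HK2 _ _ _ Hm) as [k' [Hk' Hw']].
    rewrite !Hbi1 in Hw'. specialize (Hnmin _ Hw').
    assert (A : (m <= (K1 + K2 + 1) * n)%nat) by nia.
    assert (B : (n <= (K1 + K2 + 1) * m)%nat) by nia.
    apply le_INR in A; apply le_INR in B. rewrite mult_INR in A, B.
    split.
    + apply Rmult_le_reg_l with (INR (K1 + K2 + 1)); auto.
      rewrite Rmult_minus_distr_l, <- Rmult_assoc, Rinv_r by lra. lra.
    + lra.
  - intros z. exists (bi z), 0%nat. rewrite Hbi2. split; [|simpl; lra].
    split; [constructor | intros; lia].
Qed.
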